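(* Consider the P-SSD algorithm described in the context, executed over an arbitrary, possibly time-varying, sequence of digraphs $\{G_k\}_{k\ge1}$. Then at each iteration $k\in\mathbb{N}$, $\mathcal{R}(C_k^i)\subseteq\mathcal{R}(C_{k-1}^j)$ for all $i\in\{1,\dots,M\}$ and all $j\in\{i\}\cup\mathcal{N}_{\mathrm{in}}^k(i)$.
   Context: Data setting: a map $T:\mathcal{M}\to\mathcal{M}$, $\mathcal{M}\subseteq\mathbb{R}^n$; a dictionary $D(x)=[d_1(x),\dots,d_{N_d}(x)]$ of real-valued functions on $\mathcal{M}$; data matrices $X,Y\in\mathbb{R}^{N\times n}$ whose $i$-th rows $x_i^T,y_i^T$ satisfy $y_i=T(x_i)$; $D(X)\in\mathbb{R}^{N\times N_d}$ is the matrix with rows $D(x_1),\dots,D(x_N)$ (similarly $D(Y)$). Assumption: $D(X)$ and $D(Y)$ have full column rank. There are $M$ agents; agent $i$ holds local dictionary snapshots $D(X_i),D(Y_i)$ (obtained from a subset of the snapshot pairs) such that the union over $i$ of the rows of $[D(X_i),D(Y_i)]$ equals the set of rows of $[D(X),D(Y)]$. There are signature matrices $D(X_s),D(Y_s)$ with full column rank such that the rows of $[D(X_s),D(Y_s)]$ are contained in the rows of $[D(X_i),D(Y_i)]$ for every $i$. SSD algorithm: given $A,B\in\mathbb{R}^{m\times q}$, set $A_1=A$, $B_1=B$, $C=I_q$, and iterate: let $[Z^A_j;Z^B_j]$ be a matrix whose columns form a basis of the null space of $[A_j,B_j]$ (with $Z^A_j$ having as many rows as $A_j$ has columns); if the null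 space is trivial return $0$; if the number of rows of $Z^A_j$ is at most its number of columns, return $C$; otherwise set $C\leftarrow CZ^A_j$, $A_{j+1}=A_jZ^A_j$, $B_{j+1}=B_jZ^A_j$. Its output is denoted $\mathrm{SSD}(A,B)$. P-SSD algorithm: at iteration $k\ge1$ the digraph $G_k$ is used; an edge $(j,i)\in E_k$ means $j$ is an in-neighbor of $i$, and $\mathcal{N}_{\mathrm{in}}^k(i)$ denotes the in-neighbors of $i$ in $G_k$. Each agent $i$ sets $C_0^i=I_{N_d}$, $\mathrm{flag}_0^i=0$, and for $k=1,2,\dots$: receives $C_{k-1}^j$ for $j\in\mathcal{N}_{\mathrm{in}}^k(i)$; sets $D_k^i=\mathrm{basis}\big(\bigcap_{j\in\{i\}\cup\mathcal{N}_{\mathrm{in}}^k(i)}\mathcal{R}(C_{k-1}^j)\big)$; sets $E_k^i=\mathrm{SSD}(D(X_i)D_k^i,D(Y_i)D_k^i)$; if the number of columns of $D_k^iE_k^i$ is strictly less than that of $C_{k-1}^i$, sets $C_k^i=D_k^iE_k^i$ and $\mathrm{flag}_k^i=0$; otherwise sets $C_k^i=C_{k-1}^i$ and $\mathrm{flag}_k^i=1$; then transmits $C_k^i$ to its out-neighbors. Here $\mathrm{basis}(\mathcal{A})$ returns a matrix whose columns form a basis of the subspace $\mathcal{A}$, and returns $0$ if $\mathcal{A}=\{0\}$; the matrix $0$ is regarded as having $0$ columns. $\mathcal{R}(\cdot)$ denotes range space. *)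

(* Defs.v *)
From HB Require Import structures.
From mathcomp Require Import all_boot all_order all_algebra.
From mathcomp Require Export reals.
Set Implicit Arguments. Unset Strict Implicit. Unset Printing Implicit Defensive.
Import Order.TTheory GRing.Theory Num.Theory.
Local Open Scope ring_scope.

(* Matrices act on column vectors; the range space R(A) of A : 'M_(n,c) is the
   column space of A, i.e. the MathComp row space of A^T. *)

Section Defs.
Variable R : fieldType.

Definition in_range (n c : nat) (v : 'cV[R]_n) (A : 'M[R]_(n, c)) : bool :=
  (v^T <= A^T)%MS.

Definition range_sub (n a b : nat) (A : 'M[R]_(n, a)) (B : 'M[R]_(n, b)) : bool :=
  (A^T <= B^T)%MS.

Definition is_null_basis (m k p : nat) (M : 'M[R]_(m, k)) (Z : 'M[R]_(k, p)) : Prop :=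
  \rank Z = p /\ forall v : 'cV[R]_k, (M *m v == 0) = in_range v Z.

Definition dict_rows (n Nd N p : nat) (d : 'rV[R]_n -> 'rV[R]_Nd)
  (X : 'M[R]_(N, n)) (f : 'I_p -> 'I_N) : 'M[R]_(p, Nd) :=
  \matrix_(r < p) d (row (f r) X).

Definition dict_mx (n Nd N : nat) (d : 'rV[R]_n -> 'rV[R]_Nd) (X : 'M[R]_(N, n))
  : 'M[R]_(N, Nd) := dict_rows d X id.

(* One run of the SSD algorithm (basis choices are arbitrary).
   SSD_run A_j B_j C c C_out : starting from the current state (A_j, B_j, C),
   the algorithm returns C_out (with c columns). *)
Inductive SSD_run (m q : nat) :
  forall qj : nat, 'M[R]_(m, qj) -> 'M[R]_(m, qj) -> 'M[R]_(q, qj) ->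
  forall c : nat, 'M[R]_(q, c) -> Prop :=
| SSD_zero qj p (Aj Bj : 'M[R]_(m, qj)) (Cj : 'M[R]_(q, qj)) (Z : 'M[R]_(qj + qj, p)) :
    is_null_basis (row_mx Aj Bj) Z -> p = 0%N ->
    SSD_run Aj Bj Cj (0 : 'M[R]_(q, 0))
| SSD_stop qj p (Aj Bj : 'M[R]_(m, qj)) (Cj : 'M[R]_(q, qj)) (Z : 'M[R]_(qj + qj, p)) :
    is_null_basis (row_mx Aj Bj) Z -> p <> 0%N -> (qj <= p)%N ->
    SSD_run Aj Bj Cj Cj
| SSD_step qj p (Aj Bj : 'M[R]_(m, qj)) (Cj : 'M[R]_(q, qj)) (Z : 'M[R]_(qj + qj, p))
    c (Cout : 'M[R]_(q, c)) :
    is_null_basis (row_mx Aj Bj) Z -> p <> 0%N -> (p < qj)%N ->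
    SSD_run (Aj *m usubmx Z) (Bj *m usubmx Z) (Cj *m usubmx Z) Cout ->
    SSD_run Aj Bj Cj Cout.

Definition SSD_out (m q c : nat) (A B : 'M[R]_(m, q)) (C : 'M[R]_(q, c)) : Prop :=
  SSD_run A B (1%:M : 'M[R]_(q, q)) C.

(* The columns of Dk form a basis of the intersection of R(C_j) over
   j in {i} \cup N_in(i) for the digraph Gk (Gk j i = edge (j,i)).
   If the intersection is {0}, Dk has 0 columns. *)
Definition is_cap_basis (M Nd d : nat) (Gk : rel 'I_M)
  (Cprev : 'I_M -> {c : nat & 'M[R]_(Nd, c)}) (i : 'I_M) (Dk : 'M[R]_(Nd, d)) : Prop :=
  \rank Dk = d /\
  forall v : 'cV[R]_Nd,
    in_range v Dk <-> (forall j : 'I_M, (j == i) || Gk j i -> in_range v (projT2 (Cprev j))).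

(* One iteration k of P-SSD at agent i: Cprev = (C_{k-1}^j)_j, Cnew = C_k^i,
   DXi, DYi the local dictionary snapshots of agent i. (Flags omitted:
   they do not influence the matrices C_k^i.) *)
Definition PSSD_step (M Nd Ni : nat) (DXi DYi : 'M[R]_(Ni, Nd)) (Gk : rel 'I_M)
  (Cprev : 'I_M -> {c : nat & 'M[R]_(Nd, c)}) (i : 'I_M)
  (Cnew : {c : nat & 'M[R]_(Nd, c)}) : Prop :=
  exists (d : nat) (Dk : 'M[R]_(Nd, d)),
    is_cap_basis Gk Cprev i Dk /\
    exists (e : nat) (E : 'M[R]_(d, e)),
      SSD_out (DXi *m Dk) (DYi *m Dk) E /\
      Cnew = (if (e < projT1 (Cprev i))%N
              then existT (fun c => 'M[R]_(Nd, c)) e (Dk *m E)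
              else Cprev i).

End Defs.

(* Main.v *)
Require Import Defs.
From HB Require Import structures.
From mathcomp Require Import all_boot all_order all_algebra reals.
Import Order.TTheory GRing.Theory Num.Theory.
Local Open Scope ring_scope.
Set Implicit Arguments. Unset Strict Implicit.
Section H.
Variable F : fieldType.

Definition fcr (m n : nat) (A : 'M[F]_(m, n)) :=
  forall v : 'cV[F]_n, A *m v = 0 -> v = 0.

Lemma rank_fcr m n (A : 'M[F]_(m, n)) : \rank A = n -> fcr A.
Proof.
move=> hr v hv.
have hf : row_free A^T by rewrite /row_free mxrank_tr hr.
apply: trmx_inj; apply: (row_free_inj hf).
by rewrite -trmx_mul hv !trmx0 mul0mx.
Qed.

Lemma fcr_rank m n (A : 'M[F]_(m, n)) : fcr A -> \rank A = n.
Proof.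
move=> hf.
have hK : kermx A^T = 0.
  apply/row_matrixP => i; rewrite row0.
  have h0 : row i (kermx A^T) *m A^T = 0 by rewrite -row_mul mulmx_ker row0.
  apply: trmx_inj; rewrite trmx0; apply: hf.
  by apply: trmx_inj; rewrite trmx_mul trmxK h0 trmx0.
have := mxrank_ker A^T; rewrite hK mxrank0 mxrank_tr => /esym /eqP.
rewrite subn_eq0 => h; apply/eqP; rewrite eqn_leq h andbT.
by have := rank_leq_row A^T; rewrite mxrank_tr.
Qed.

Lemma fcrM m n p (A : 'M[F]_(m, n)) (B : 'M[F]_(n, p)) :
  fcr A -> fcr B -> fcr (A *m B).
Proof. by move=> hA hB v; rewrite -mulmxA => /hA /hB. Qed.

Lemma fcr1 n : fcr (1%:M : 'M[F]_n).
Proof. by move=> v; rewrite mul1mx. Qed.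

Lemma fcr0 m (A : 'M[F]_(m, 0)) : fcr A.
Proof. by move=> v _; apply/matrixP => i j; case: i. Qed.

Lemma usub_fcr qj p m (Aj Bj : 'M[F]_(m, qj)) (Z : 'M[F]_(qj + qj, p)) :
  is_null_basis (row_mx Aj Bj) Z -> fcr Bj -> fcr (usubmx Z).
Proof.
move=> [hr hZ] hB v hv.
have hZf := rank_fcr hr.
apply: hZf.
have h1 : row_mx Aj Bj *m (Z *m v) == 0.
  by rewrite hZ /in_range trmx_mul submxMl.
have hd : dsubmx Z *m v = 0.
  apply: hB; move: h1; rewrite -{1}(vsubmxK Z) mul_col_mx mul_row_col.
  by rewrite hv mulmx0 add0r => /eqP.
by rewrite -(vsubmxK Z) mul_col_mx hv hd col_mx0.
Qed.

Lemma SSD_fcr m q qj (Aj Bj : 'M[F]_(m, qj)) (Cj : 'M[F]_(q, qj)) c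
  (Cout : 'M[F]_(q, c)) :
  SSD_run Aj Bj Cj Cout -> fcr Bj -> fcr Cj -> fcr Cout.
Proof.
elim=> {qj Aj Bj Cj c Cout}.
- by move=> *; apply: fcr0.
- by move=> *.
- move=> qj p Aj Bj Cj Z c Cout hZ _ _ _ IH hB hC.
  have hU := usub_fcr hZ hB.
  by apply: IH; apply: fcrM.
Qed.

End H.
Lemma cap_sub (R : fieldType) (M Nd dd : nat) (Gk : rel 'I_M)
  (Cprev : 'I_M -> {c : nat & 'M[R]_(Nd, c)}) (i : 'I_M) (Dk : 'M[R]_(Nd, dd)) j :
  is_cap_basis Gk Cprev i Dk -> (j == i) || Gk j i ->
  (Dk^T <= (projT2 (Cprev j))^T)%MS.
Proof.
move=> [_ h] hj; apply/row_subP => r.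
have hv : in_range (col r Dk) Dk by rewrite /in_range tr_col row_sub.
have := (proj1 (h _) hv j hj); by rewrite /in_range tr_col.
Qed.

Theorem lemma4p7 (R : realType) (n Nd N M : nat)
  (Mset : 'rV[R]_n -> Prop) (T : 'rV[R]_n -> 'rV[R]_n)
  (d : 'rV[R]_n -> 'rV[R]_Nd) (X Y : 'M[R]_(N, n))
  (Ni : 'I_M -> nat) (idx : forall i : 'I_M, 'I_(Ni i) -> 'I_N)
  (Ns : nat) (DXs DYs : 'M[R]_(Ns, Nd))
  (G : nat -> rel 'I_M)
  (C : nat -> 'I_M -> {c : nat & 'M[R]_(Nd, c)}) :
  (forall x, Mset x -> Mset (T x)) ->
  (forall l : 'I_N, Mset (row l X)) ->
  (forall l : 'I_N, row l Y = T (row l X)) ->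
  \rank (dict_mx d X) = Nd -> \rank (dict_mx d Y) = Nd ->
  (forall i : 'I_M, injective (idx i)) ->
  (forall l : 'I_N, exists (i : 'I_M) (r : 'I_(Ni i)),
      row r (row_mx (dict_rows d X (idx i)) (dict_rows d Y (idx i)))
      = row l (row_mx (dict_mx d X) (dict_mx d Y))) ->
  \rank DXs = Nd -> \rank DYs = Nd ->
  (forall (i : 'I_M) (r : 'I_Ns), exists r' : 'I_(Ni i),
      row r' (row_mx (dict_rows d X (idx i)) (dict_rows d Y (idx i)))
      = row r (row_mx DXs DYs)) ->
  (forall i : 'I_M, C 0%N i = existT (fun c => 'M[R]_(Nd, c)) Nd 1%:M) ->
  (forall (k : nat) (i : 'I_M),
      PSSD_step (dict_rows d X (idx i)) (dict_rows d Y (idx i)) (G k.+1) (C k) i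
        (C k.+1 i)) ->
  forall (k : nat) (i j : 'I_M), (j == i) || G k.+1 j i ->
    range_sub (projT2 (C k.+1 i)) (projT2 (C k j)).
Proof.
move=> _ _ _ _ _ _ _ _ hDYs hsig hC0 hstep.
have hDY : forall i, fcr (dict_rows d Y (idx i)).
  move=> i v hv; apply: (rank_fcr hDYs).
  apply/row_matrixP => r; rewrite row0 row_mul.
  have [r' hr'] := hsig i r.
  move: hr'; rewrite !row_row_mx => /eq_row_mx [_ <-].
  by rewrite -row_mul hv row0.
have hCf : forall k i, fcr (projT2 (C k i)).
  elim=> [|k IH] i; first by rewrite hC0 /=; apply: fcr1.
  have [dd [Dk [hcap [e [E [hE ->]]]]]] := hstep k i.
  case: ifP => _ //=.
  have hD : fcr Dk by apply: rank_fcr; case: hcap.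
  apply: fcrM => //; apply: (SSD_fcr hE); [exact: fcrM | exact: fcr1].
move=> k i j hj.
have [dd [Dk [hcap [e [E [hE hnew]]]]]] := hstep k i.
have hD : fcr Dk by apply: rank_fcr; case: hcap.
have hDj := cap_sub hcap hj.
rewrite /range_sub hnew; case: ifP => he /=.
  by rewrite trmx_mul (submx_trans (submxMl _ _) hDj).
have hDi := cap_sub (j:=i) hcap (introT orP (or_introl (eqxx i))).
have hDE : fcr (Dk *m E) by apply: fcrM => //; apply: (SSD_fcr hE); [exact: fcrM | exact: fcr1].
have hsub : ((Dk *m E)^T <= (projT2 (C k i))^T)%MS.
  by rewrite trmx_mul (submx_trans (submxMl _ _) hDi).
have heq := mxrank_leqif_sup hsub.
have hle : (\rank (projT2 (C k i))^T <= \rank (Dk *m E)^T)%N.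
  rewrite !mxrank_tr (fcr_rank hDE) (fcr_rank (hCf k i)).
  by rewrite leqNgt he.
move: hle; rewrite (geq_leqif heq) => hback.
apply: submx_trans hback _.
by rewrite trmx_mul (submx_trans (submxMl _ _) hDj).
Qed.
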